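(* Let $(E,P,\vartheta)$ be a complete bipolar metric space and let $F\colon E\cup P\to E\cup P$ with $F(E)\subseteq E$, $F(P)\subseteq P$ be a polynomial contraction, i.e. there exist $\pi\in(0,1)$, an integer $\sigma\geq1$ and functions $q_\upsilon\colon E\times P\to[0,\infty)$, $\upsilon=0,\dots,\sigma$, such that $$\sum_{\upsilon=0}^{\sigma} q_\upsilon(Fe,Ff)\,\vartheta^\upsilon(Fe,Ff)\leq \pi\sum_{\upsilon=0}^{\sigma} q_\upsilon(e,f)\,\vartheta^\upsilon(e,f)\quad\text{for all } e\in E,\ f\in P.$$ Assume (i) $q_0\equiv 0$; (ii) for every $\upsilon\in\{1,\dots,\sigma\}$ there is $W_\upsilon>0$ with $q_\upsilon(e,f)\leq W_\upsilon$ for all $e\in E$, $f\in P$; (iii) there exist $\varrho\in\{1,\dots,\sigma\}$ and $Q_\varrho>0$ with $q_\varrho(e,f)\geq Q_\varrho$ for all $e\in E$, $f\in P$. Then $F$ has a unique fixed point.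
   Context: A bipolar metric space is a triple $(E,P,\vartheta)$ where $E,P$ are nonempty sets and $\vartheta\colon E\times P\to[0,\infty)$ satisfies: (1) for $e\in E$, $f\in P$, $\vartheta(e,f)=0$ iff $e=f$; (2) $\vartheta(e,f)=\vartheta(f,e)$ whenever $e,f\in E\cap P$; (3) $\vartheta(e,f)\leq\vartheta(e,z)+\vartheta(r,z)+\vartheta(r,f)$ for all $e,r\in E$, $z,f\in P$. A sequence $(x_n)$ in $E$ converges to $y\in P$ if $\vartheta(x_n,y)\to0$; a sequence $(y_n)$ in $P$ converges to $x\in E$ if $\vartheta(x,y_n)\to0$. A bisequence $(x_n,y_n)$ with $x_n\in E$, $y_n\in P$ is Cauchy if for every $\varepsilon>0$ there is $N$ with $\vartheta(x_n,y_m)<\varepsilon$ for all $n,m\geq N$; the space is complete if every Cauchy bisequence is convergent (both component sequences converge). $\vartheta^\upsilon$ denotes the $\upsilon$-th power of $\vartheta$, with $\vartheta^0\equiv1$. A fixed point of $F$ is a point $g$ with $Fg=g$. *)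

(* Defs.v *)
From Stdlib Require Export Reals.
Open Scope R_scope.

(* A bipolar metric space (E,P,d): E and P are (possibly overlapping) subsets
   of a common ambient type T; d is only meaningful on E x P. *)
Definition bipolar_metric {T : Type} (E P : T -> Prop) (d : T -> T -> R) : Prop :=
  (exists e, E e) /\ (exists f, P f) /\
  (forall e f, E e -> P f -> 0 <= d e f) /\
  (forall e f, E e -> P f -> (d e f = 0 <-> e = f)) /\
  (forall e f, E e -> P e -> E f -> P f -> d e f = d f e) /\
  (forall e r z f, E e -> E r -> P z -> P f ->
     d e f <= d e z + d r z + d r f).

Definition cvg_left {T : Type} (P : T -> Prop) (d : T -> T -> R)
  (x : nat -> T) (y : T) : Prop :=
  P y /\ forall eps, 0 < eps -> exists N, forall n, (N <= n)%nat -> d (x n) y < eps.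

Definition cvg_right {T : Type} (E : T -> Prop) (d : T -> T -> R)
  (y : nat -> T) (x : T) : Prop :=
  E x /\ forall eps, 0 < eps -> exists N, forall n, (N <= n)%nat -> d x (y n) < eps.

Definition cauchy_bisequence {T : Type} (d : T -> T -> R) (x y : nat -> T) : Prop :=
  forall eps, 0 < eps -> exists N, forall n m, (N <= n)%nat -> (N <= m)%nat ->
    d (x n) (y m) < eps.

Definition bp_complete {T : Type} (E P : T -> Prop) (d : T -> T -> R) : Prop :=
  forall x y : nat -> T, (forall n, E (x n)) -> (forall n, P (y n)) ->
    cauchy_bisequence d x y ->
    (exists b, cvg_left P d x b) /\ (exists a, cvg_right E d y a).

(* Main.v *)
Require Import Defs.
From Stdlib Require Import Reals.
From Stdlib Require Import Lra Lia.
Open Scope R_scope.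

Lemma my_pow_le1 (x : R) (n : nat) : 0 <= x <= 1 -> x ^ n <= 1.
Proof.
  intros H. induction n as [|n IH]; simpl; [lra|].
  assert (0 <= x ^ n) by (apply pow_le; lra). nra.
Qed.

Lemma my_pow_strict (x y : R) (n : nat) : 0 <= x < y -> x ^ (S n) < y ^ (S n).
Proof.
  intros H. simpl.
  assert (x ^ n <= y ^ n) by (apply pow_incr; lra).
  assert (0 < y ^ n) by (apply pow_lt; lra).
  assert (0 <= x ^ n) by (apply pow_le; lra).
  nra.
Qed.

Lemma my_pow_ge_self (x : R) (n : nat) : 1 <= x -> x <= x ^ (S n).
Proof.
  intros H. induction n as [|n IH]; simpl in *; [lra|].
  nra.
Qed.

Lemma bernoulli (t : R) (n : nat) : 0 <= t <= 1 -> 1 - INR n * t <= (1 - t) ^ n.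
Proof.
  intros H. induction n as [|n IH]; [simpl; lra|].
  rewrite S_INR; simpl. assert (0 <= INR n) by apply pos_INR. nra.
Qed.

Lemma sum_nonneg (g : nat -> R) (n : nat) :
  (forall k, (k <= n)%nat -> 0 <= g k) -> 0 <= sum_f_R0 g n.
Proof.
  intros H. induction n as [|n IH]; simpl.
  - apply H; lia.
  - assert (0 <= g (S n)) by (apply H; lia).
    assert (0 <= sum_f_R0 g n) by (apply IH; intros; apply H; lia). lra.
Qed.

Lemma sum_ge_term (g : nat -> R) (n rho : nat) :
  (forall k, (k <= n)%nat -> 0 <= g k) -> (rho <= n)%nat -> g rho <= sum_f_R0 g n.
Proof.
  intros H Hr. induction n as [|n IH]; simpl.
  - replace rho with 0%nat by lia. lra.
  - assert (0 <= g (S n)) by (apply H; lia).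
    destruct (Nat.eq_dec rho (S n)) as [->|Hne].
    + assert (0 <= sum_f_R0 g n) by (apply sum_nonneg; intros; apply H; lia). lra.
    + assert (g rho <= sum_f_R0 g n) by (apply IH; [intros; apply H; lia| lia]). lra.
Qed.

Theorem corollary3p5 (T : Type) (E P : T -> Prop) (d : T -> T -> R)
  (F : T -> T) (pi : R) (sigma : nat) (q : nat -> T -> T -> R) :
  bipolar_metric E P d ->
  bp_complete E P d ->
  (forall e, E e -> E (F e)) ->
  (forall f, P f -> P (F f)) ->
  0 < pi < 1 ->
  (1 <= sigma)%nat ->
  (forall v e f, (v <= sigma)%nat -> E e -> P f -> 0 <= q v e f) ->
  (forall e f, E e -> P f ->
     sum_f_R0 (fun v => q v (F e) (F f) * d (F e) (F f) ^ v) sigma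
     <= pi * sum_f_R0 (fun v => q v e f * d e f ^ v) sigma) ->
  (forall e f, E e -> P f -> q 0%nat e f = 0) ->
  (forall v, (1 <= v <= sigma)%nat ->
     exists W, 0 < W /\ forall e f, E e -> P f -> q v e f <= W) ->
  (exists rho Q, (1 <= rho <= sigma)%nat /\ 0 < Q /\
     forall e f, E e -> P f -> Q <= q rho e f) ->
  exists g, (E g \/ P g) /\ F g = g /\
    forall h, (E h \/ P h) -> F h = h -> h = g.
Proof.
  intros [[e0 He0] [[f0 Hf0] [Hd0 [Hdz [Hsym Htri]]]]] Hcomp HFE HFP Hpi Hsig Hq0
    Hcontr Hqz HW [rho [Q [Hrho [HQ HQle]]]].
  set (Phi := fun e f => sum_f_R0 (fun v => q v e f * d e f ^ v) sigma).
  assert (Phi_nn : forall e f, E e -> P f -> 0 <= Phi e f).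
  { intros e f He Hf. apply sum_nonneg. intros k Hk.
    apply Rmult_le_pos; [apply Hq0; auto | apply pow_le; apply Hd0; auto]. }
  assert (Phi_low : forall e f, E e -> P f -> Q * d e f ^ rho <= Phi e f).
  { intros e f He Hf.
    apply Rle_trans with (q rho e f * d e f ^ rho).
    - apply Rmult_le_compat_r; [apply pow_le; apply Hd0; auto | apply HQle; auto].
    - apply (sum_ge_term (fun v => q v e f * d e f ^ v)); [|lia].
      intros k Hk. apply Rmult_le_pos; [apply Hq0; auto | apply pow_le; apply Hd0; auto]. }
  assert (Phi_up : exists Wt, 0 <= Wt /\ forall e f, E e -> P f -> d e f <= 1 ->
                     Phi e f <= Wt * d e f).
  { assert (H : forall n, (n <= sigma)%nat -> exists Wt, 0 <= Wt /\
       forall e f, E e -> P f -> d e f <= 1 ->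
       sum_f_R0 (fun v => q v e f * d e f ^ v) n <= Wt * d e f).
    { induction n as [|n IH]; intros Hn.
      - exists 0. split; [lra|]. intros e f He Hf _. simpl. rewrite Hqz; auto.
        assert (0 <= d e f) by auto. lra.
      - destruct IH as [W1 [HW1 H1]]; [lia|].
        destruct (HW (S n)) as [W2 [HW2 H2]]; [lia|].
        exists (W1 + W2). split; [lra|]. intros e f He Hf Hle.
        simpl. specialize (H1 e f He Hf Hle). specialize (H2 e f He Hf).
        assert (0 <= d e f) by auto.
        assert (0 <= d e f ^ n) by (apply pow_le; auto).
        assert (d e f ^ n <= 1) by (apply my_pow_le1; lra).
        assert (0 <= q (S n) e f) by (apply Hq0; auto).
        assert (q (S n) e f * d e f ^ n <= W2) by nra.
        assert (q (S n) e f * (d e f * d e f ^ n) <= W2 * d e f) by nra.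
        nra. }
    destruct (H sigma (le_n _)) as [Wt [HWt HH]]. exists Wt. split; auto. }
  destruct Phi_up as [Wt [HWt Phi_up]].
  set (t := (1 - pi) / INR rho).
  assert (HrhoR : 1 <= INR rho) by (replace 1 with (INR 1) by reflexivity; apply le_INR; lia).
  assert (Ht : 0 < t <= 1 - pi).
  { unfold t. split. apply Rdiv_lt_0_compat; lra.
    apply Rmult_le_reg_r with (INR rho); [lra|]. unfold Rdiv.
    rewrite Rmult_assoc, Rinv_l by lra. nra. }
  set (r := 1 - t).
  assert (Hr : 0 < r < 1) by (unfold r; lra).
  assert (Hrpi : pi <= r ^ rho).
  { unfold r. pose proof (bernoulli t rho ltac:(lra)).
    unfold t in H at 1. replace (INR rho * ((1 - pi) / INR rho)) with (1 - pi) in H by (field; lra).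
    lra. }
  assert (iterE : forall k e, E e -> E (Nat.iter k F e)).
  { induction k; intros; simpl; auto. }
  assert (iterP : forall k e, P e -> P (Nat.iter k F e)).
  { induction k; intros; simpl; auto. }
  assert (Phi_iter : forall k e f, E e -> P f ->
            Phi (Nat.iter k F e) (Nat.iter k F f) <= pi ^ k * Phi e f).
  { induction k; intros e f He Hf; simpl.
    - lra.
    - apply Rle_trans with (pi * Phi (Nat.iter k F e) (Nat.iter k F f)).
      + apply Hcontr; auto.
      + specialize (IHk e f He Hf). nra. }
  assert (geo : forall e f, E e -> P f -> exists C, 1 <= C /\
            forall k, d (Nat.iter k F e) (Nat.iter k F f) <= C * r ^ k).
  { intros e f He Hf.
    set (C := Rmax 1 (Phi e f / Q)).
    exists C. split; [apply Rmax_l|]. intros k.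
    destruct (Rle_or_lt (d (Nat.iter k F e) (Nat.iter k F f)) (C * r ^ k)) as [Hl|Hl]; auto.
    exfalso.
    set (a := d (Nat.iter k F e) (Nat.iter k F f)) in *.
    assert (HC1 : 1 <= C) by apply Rmax_l.
    assert (HC2 : Phi e f / Q <= C) by apply Rmax_r.
    assert (Hrk : 0 < r ^ k) by (apply pow_lt; lra).
    destruct rho as [|rho']; [lia|].
    assert (H1 : (C * r ^ k) ^ S rho' < a ^ S rho') by (apply my_pow_strict; nra).
    assert (H2 : Q * a ^ S rho' <= pi ^ k * Phi e f).
    { eapply Rle_trans; [apply Phi_low; auto|]. apply Phi_iter; auto. }
    rewrite Rpow_mult_distr in H1.
    assert (H3 : C <= C ^ S rho') by (apply my_pow_ge_self; auto).
    assert (H4 : pi ^ k <= (r ^ k) ^ S rho').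
    { rewrite <- pow_mult, Nat.mul_comm, pow_mult. apply pow_incr. lra. }
    assert (H5 : 0 <= Phi e f) by auto.
    assert (H6 : Phi e f <= C * Q).
    { apply Rmult_le_reg_r with (/ Q). apply Rinv_0_lt_compat; lra.
      rewrite Rmult_assoc, Rinv_r by lra. unfold Rdiv in HC2. lra. }
    assert (H7 : 0 <= pi ^ k) by (apply pow_le; lra).
    assert (H8 : 0 < (r ^ k) ^ S rho') by (apply pow_lt; auto).
    assert (pi ^ k * Phi e f <= Q * (C * (r ^ k) ^ S rho')) by nra.
    assert (C * (r^k)^S rho' <= C ^ S rho' * (r ^ k) ^ S rho') by nra.
    nra. }
  set (x := fun n => Nat.iter n F e0).
  set (y := fun n => Nat.iter n F f0).
  destruct (geo e0 f0 He0 Hf0) as [C1 [HC1 Ha]].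
  destruct (geo (F e0) f0 (HFE _ He0) Hf0) as [C2 [HC2 Hb]].
  set (K := 3 * (C1 + C2)).
  assert (Hxy : forall n, d (x n) (y n) <= K * r ^ n).
  { intros n. specialize (Ha n). assert (0 < r ^ n) by (apply pow_lt; lra).
    unfold x, y, K. nra. }
  assert (Hs : forall n, d (x n) (y n) + d (x (S n)) (y (S n)) + d (x (S n)) (y n) <= K * r ^ n).
  { intros n. pose proof (Ha n) as H1. pose proof (Ha (S n)) as H2. pose proof (Hb n) as H3.
    assert (0 < r ^ n) by (apply pow_lt; lra).
    rewrite <- Nat.iter_succ_r in H3. simpl (r ^ S n) in H2.
    assert (r * r ^ n <= r ^ n) by nra.
    unfold x, y, K. nra. }
  assert (HxE : forall n, E (x n)) by (intros; apply iterE; auto).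
  assert (HyP : forall n, P (y n)) by (intros; apply iterP; auto).
  assert (HK : 0 < K) by (unfold K; lra).
  assert (Hdn : forall n, 0 <= d (x n) (y n)) by (intros; apply Hd0; auto).
  assert (Hdb : forall n, 0 <= d (x (S n)) (y n)) by (intros; apply Hd0; auto).
  assert (up1 : forall j n, d (x n) (y (n + j)%nat) <= K * r ^ n / (1 - r) + d (x (n+j)%nat) (y (n+j)%nat)).
  { induction j as [|j IH]; intros n.
    - rewrite Nat.add_0_r. assert (0 < r ^ n) by (apply pow_lt; lra).
      assert (0 <= K * r ^ n / (1 - r)) by (apply Rmult_le_pos; [nra| apply Rlt_le, Rinv_0_lt_compat; lra]).
      lra.
    - eapply Rle_trans; [apply (Htri _ (x (S n)) (y n)); auto|].
      specialize (IH (S n)). replace (S n + j)%nat with (n + S j)%nat in IH by lia.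
      pose proof (Hs n). pose proof (Hdn (S n)).
      assert (K * r ^ n + K * r ^ S n / (1 - r) = K * r ^ n / (1 - r)) by (simpl; field; lra).
      lra. }
  assert (up2 : forall j m, d (x (m + j)%nat) (y m) <= K * r ^ m / (1 - r) + d (x (m+j)%nat) (y (m+j)%nat)).
  { induction j as [|j IH]; intros m.
    - rewrite Nat.add_0_r. assert (0 < r ^ m) by (apply pow_lt; lra).
      assert (0 <= K * r ^ m / (1 - r)) by (apply Rmult_le_pos; [nra| apply Rlt_le, Rinv_0_lt_compat; lra]).
      lra.
    - eapply Rle_trans; [apply (Htri _ (x (S m)) (y (S m))); auto|].
      specialize (IH (S m)). replace (S m + j)%nat with (m + S j)%nat in IH by lia.
      pose proof (Hs m). pose proof (Hdn m).
      assert (K * r ^ m + K * r ^ S m / (1 - r) = K * r ^ m / (1 - r)) by (simpl; field; lra).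
      lra. }
  set (M := K / (1 - r) + K).
  assert (HM : 0 < M).
  { unfold M. assert (0 < K / (1 - r)) by (apply Rdiv_lt_0_compat; lra). lra. }
  assert (up : forall n m, d (x n) (y m) <= M * r ^ (Nat.min n m)).
  { intros n m. destruct (Nat.le_ge_cases n m) as [Hnm|Hnm].
    - replace m with (n + (m - n))%nat by lia. rewrite Nat.min_l by lia.
      eapply Rle_trans; [apply up1|].
      pose proof (Hxy (n + (m - n))%nat). rewrite pow_add in H.
      assert (r ^ (m - n) <= 1) by (apply my_pow_le1; lra).
      assert (0 < r ^ n) by (apply pow_lt; lra).
      assert (K * r ^ n * r ^ (m - n) <= K * r ^ n).
      { rewrite <- (Rmult_1_r (K * r ^ n)) at 2. apply Rmult_le_compat_l; [nra|lra]. }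
      assert (K * r ^ n / (1 - r) + K * r ^ n = M * r ^ n) by (unfold M; field; lra).
      lra.
    - replace n with (m + (n - m))%nat by lia. rewrite Nat.min_r by lia.
      eapply Rle_trans; [apply up2|].
      pose proof (Hxy (m + (n - m))%nat). rewrite pow_add in H.
      assert (r ^ (n - m) <= 1) by (apply my_pow_le1; lra).
      assert (0 < r ^ m) by (apply pow_lt; lra).
      assert (K * r ^ m * r ^ (n - m) <= K * r ^ m).
      { rewrite <- (Rmult_1_r (K * r ^ m)) at 2. apply Rmult_le_compat_l; [nra|lra]. }
      assert (K * r ^ m / (1 - r) + K * r ^ m = M * r ^ m) by (unfold M; field; lra).
      lra. }
  assert (Hcauchy : cauchy_bisequence d x y).
  { intros eps Heps.
    destruct (pow_lt_1_zero r ltac:(rewrite Rabs_right; lra) (eps / M)) as [N HN].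
    { apply Rdiv_lt_0_compat; lra. }
    exists N. intros n m Hn Hm.
    eapply Rle_lt_trans; [apply up|].
    specialize (HN (Nat.min n m) ltac:(lia)).
    rewrite Rabs_right in HN by (apply Rle_ge, pow_le; lra).
    apply Rmult_lt_reg_r with (/ M); [apply Rinv_0_lt_compat; lra|].
    rewrite Rmult_comm, <- Rmult_assoc, Rinv_l by lra. unfold Rdiv in HN. lra. }
  destruct (Hcomp x y HxE HyP Hcauchy) as [[b [Hb' Hxb]] [a [Ha' Hya]]].
  assert (Hab : a = b).
  { apply Hdz; auto.
    assert (d a b <= 0).
    { apply Rle_plus_epsilon. intros eps Heps. rewrite Rplus_0_l.
      destruct (Hxb (eps/3) ltac:(lra)) as [N1 H1].
      destruct (Hya (eps/3) ltac:(lra)) as [N2 H2].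
      destruct (Hcauchy (eps/3) ltac:(lra)) as [N3 H3].
      set (n := (N1 + N2 + N3)%nat).
      specialize (H1 n ltac:(unfold n; lia)). specialize (H2 n ltac:(unfold n; lia)).
      specialize (H3 n n ltac:(unfold n; lia) ltac:(unfold n; lia)).
      pose proof (Htri a (x n) (y n) b Ha' (HxE n) (HyP n) Hb'). lra. }
    pose proof (Hd0 a b Ha' Hb'). lra. }
  subst b.
  assert (Hfix : F a = a).
  {
    assert (HFa : P (F a)) by auto.
    assert (Hda : d a (F a) <= 0).
    { destruct (Rle_or_lt (d a (F a)) 0) as [Hl|Hl]; auto. exfalso.
      set (delta := d a (F a)) in *.
      set (c := (delta / 3) ^ rho).
      assert (Hc : 0 < c) by (apply pow_lt; lra).
      set (eps1 := Rmin 1 (c * Q / (Wt + 1))).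
      assert (He1 : 0 < eps1).
      { unfold eps1. apply Rmin_pos; [lra|]. apply Rdiv_lt_0_compat; [nra|lra]. }
      destruct (Hxb eps1 He1) as [N1 H1].
      destruct (Hya (delta/3) ltac:(lra)) as [N2 H2].
      destruct (Hcauchy (delta/3) ltac:(lra)) as [N3 H3].
      set (n := (N1 + N2 + N3)%nat).
      specialize (H1 n ltac:(unfold n; lia)). specialize (H2 (S n) ltac:(unfold n; lia)).
      specialize (H3 (S n) (S n) ltac:(unfold n; lia) ltac:(unfold n; lia)).
      pose proof (Htri a (x (S n)) (y (S n)) (F a) Ha' (HxE _) (HyP _) HFa).
      assert (Hfar : delta / 3 < d (x (S n)) (F a)) by (unfold delta in *; lra).
      assert (Hpow : c < d (x (S n)) (F a) ^ rho).
      { unfold c. destruct rho as [|rho']; [lia|]. apply my_pow_strict. lra. }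
      assert (Hlow := Phi_low (x (S n)) (F a) (HxE _) HFa).
      assert (Hx1 : x (S n) = F (x n)) by reflexivity.
      assert (Hc1 : Phi (x (S n)) (F a) <= pi * Phi (x n) a).
      { rewrite Hx1. apply Hcontr; auto. }
      assert (He1' : eps1 <= 1) by apply Rmin_l.
      assert (He2' : eps1 <= c * Q / (Wt + 1)) by apply Rmin_r.
      assert (Hd1 : 0 <= d (x n) a) by (apply Hd0; auto).
      assert (Hup := Phi_up (x n) a (HxE _) Hb' ltac:(lra)).
      assert (Hnn := Phi_nn (x n) a (HxE _) Hb').
      assert (Hce : (Wt + 1) * eps1 <= c * Q).
      { apply Rmult_le_reg_r with (/ (Wt + 1)); [apply Rinv_0_lt_compat; lra|].
        replace ((Wt + 1) * eps1 * / (Wt + 1)) with eps1 by (field; lra). exact He2'. }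
      assert (Phi (x n) a < c * Q) by nra.
      nra. }
    symmetry. apply Hdz; auto. pose proof (Hd0 a (F a) Ha' HFa). lra. }
  assert (uniq : forall e f, E e -> P f -> F e = e -> F f = f -> d e f = 0).
  { intros e f He Hf Hfe Hff.
    pose proof (Hcontr e f He Hf) as Hc. fold (Phi (F e) (F f)) in Hc. fold (Phi e f) in Hc.
    rewrite Hfe, Hff in Hc.
    pose proof (Phi_nn e f He Hf). pose proof (Phi_low e f He Hf).
    assert (Hz : Phi e f <= 0) by nra.
    destruct (Rle_or_lt (d e f) 0) as [Hl|Hl].
    - pose proof (Hd0 e f He Hf). lra.
    - exfalso. assert (0 < d e f ^ rho) by (apply pow_lt; lra). nra. }
  exists a. split; [left; auto|]. split; auto.
  intros h [HhE|HhP] HFh.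
  - apply Hdz; auto.
  - symmetry. apply Hdz; auto.
Qed.
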